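(* Let $K\ge2$ and let $\mathbf{W},\mathbf{W}'$ be $K\times K$ invertible row-stochastic matrices. Then, entrywise, $$\boldsymbol{\Phi}(\mathbf{W}\mathbf{W}')\ge\boldsymbol{\Phi}(\mathbf{W}),$$ with equality in all $K^2$ entries if and only if $\mathbf{W}'$ is a permutation matrix.
   Context: For an invertible matrix $\mathbf{W}$, $\boldsymbol{\Phi}(\mathbf{W})=\mathbf{W}(\mathbf{W}^{-1}\odot\mathbf{W}^{-1})$, where $\odot$ is the entrywise (Hadamard) product. A matrix inequality $\mathbf{A}\ge\mathbf{B}$ means $A_{k,\ell}\ge B_{k,\ell}$ for all $k,\ell$. *)

(* Defs.v *)
From mathcomp Require Import all_boot all_order all_algebra.
Set Implicit Arguments. Unset Strict Implicit. Unset Printing Implicit Defensive.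
Import Order.TTheory GRing.Theory Num.Theory.
Local Open Scope ring_scope.

Definition row_stochastic (R : realFieldType) (K : nat) (W : 'M[R]_K) : Prop :=
  (forall i j, 0 <= W i j) /\ (forall i, \sum_(j < K) W i j = 1).

Definition hadamard (R : pzRingType) (m n : nat) (A B : 'M[R]_(m, n)) : 'M[R]_(m, n) :=
  \matrix_(i, j) (A i j * B i j).

Definition Phi (R : realFieldType) (K : nat) (W : 'M[R]_K) : 'M[R]_K :=
  W *m hadamard (invmx W) (invmx W).

(* Main.v *)
Require Import Defs.
From mathcomp Require Import all_boot all_order all_algebra.
From mathcomp Require Import ring perm.
Import Order.TTheory GRing.Theory Num.Theory.
Local Open Scope ring_scope.

Lemma phi_entry (R : realFieldType) (K : nat) (M : 'M[R]_K) i j :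
  Phi M i j = \sum_k M i k * (invmx M k j) ^+ 2.
Proof. by rewrite /Phi mxE; apply: eq_bigr => k _; rewrite /hadamard mxE expr2. Qed.

Lemma inv_fact (R : realFieldType) (K : nat) (W W' : 'M[R]_K) :
  W \in unitmx -> W' \in unitmx ->
  invmx W = W' *m invmx (W *m W').
Proof.
move=> hW hW'.
have hWW : W *m W' \in unitmx by rewrite unitmx_mul hW hW'.
by rewrite -[invmx W]mulmx1 -(mulmxV hWW) !mulmxA mulVmx // mul1mx.
Qed.

Lemma variance (R : realFieldType) (K : nat) (w x : 'I_K -> R) (v : R) :
  \sum_m w m = 1 -> v = \sum_m w m * x m ->
  \sum_m w m * x m ^+ 2 - v ^+ 2 = \sum_m w m * (x m - v) ^+ 2.
Proof.
move=> h1 hv.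
have e : forall m, w m * (x m - v) ^+ 2 =
   w m * x m ^+ 2 - (v *+ 2 * (w m * x m) - v ^+ 2 * w m) by move=> m; ring.
rewrite (eq_bigr _ (fun m _ => e m)) sumrB sumrB -!mulr_sumr h1 -hv.
ring.
Qed.

Lemma key (R : realFieldType) (K : nat) (W W' : 'M[R]_K) k l :
  W \in unitmx -> W' \in unitmx -> (forall n, \sum_m W' n m = 1) ->
  Phi (W *m W') k l - Phi W k l =
  \sum_n W k n * \sum_m W' n m * (invmx (W *m W') m l - invmx W n l) ^+ 2.
Proof.
move=> hW hW' hs.
have hV := @inv_fact _ _ _ _ hW hW'.
transitivity (\sum_n W k n * (\sum_m W' n m * invmx (W *m W') m l ^+ 2
                - invmx W n l ^+ 2)); last first.
  apply: eq_bigr => n _; rewrite variance //.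
  by rewrite {1}hV mxE.
rewrite (eq_bigr (fun n => W k n * (\sum_m W' n m * invmx (W *m W') m l ^+ 2)
      - W k n * invmx W n l ^+ 2)); last by move=> n _; rewrite mulrBr.
rewrite sumrB !phi_entry; congr (_ - _).
rewrite (eq_bigr (fun m => \sum_n W k n * (W' n m * invmx (W *m W') m l ^+ 2))); last first.
  by move=> m _; rewrite mxE mulr_suml; apply: eq_bigr => n _; rewrite mulrA.
by rewrite exchange_big; apply: eq_bigr => n _; rewrite mulr_sumr.
Qed.

Theorem theorem7 (R : realFieldType) (K : nat) (hK : (2 <= K)%N)
  (W W' : 'M[R]_K) :
  row_stochastic W -> row_stochastic W' ->
  W \in unitmx -> W' \in unitmx ->
  (forall i j, Phi W i j <= Phi (W *m W') i j) /\
  ((forall i j, Phi (W *m W') i j = Phi W i j) <-> is_perm_mx W').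
Proof.
move=> [W0 Ws] [W'0 W's] hW hW'.
have hd k l := @key _ _ W W' k l hW hW' W's.
have hWW : W *m W' \in unitmx by rewrite unitmx_mul hW hW'.
have dge : forall n l, 0 <= \sum_m W' n m *
    (invmx (W *m W') m l - invmx W n l) ^+ 2.
  by move=> n l; apply: sumr_ge0 => m _; apply: mulr_ge0 => //; apply: sqr_ge0.
have rowinj : forall (M : 'M[R]_K) m m', M \in unitmx -> M m =1 M m' -> m = m'.
  move=> M m m' hM e; apply/eqP; apply: contraT => ne.
  move: hM; rewrite unitmxE (determinant_alternate ne e).
  by rewrite unitr0.
split.
  by move=> i j; rewrite -subr_ge0 hd; apply: sumr_ge0 => n _; apply: mulr_ge0.
split.
  move=> heq.
  have colnz : forall n, exists k, W k n != 0.
    move=> n; apply/existsP; apply: contraT; rewrite negb_exists => /forallP h.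
    have := mulVmx hW; move/matrixP => /(_ n n); rewrite !mxE big1 ?eqxx.
      by move/eqP; rewrite eq_sym oner_eq0.
    by move=> j _; move: (h j); rewrite negbK => /eqP ->; rewrite mulr0.
  have d0 : forall n l, \sum_m W' n m *
       (invmx (W *m W') m l - invmx W n l) ^+ 2 = 0.
    move=> n l; have [k hk] := colnz n.
    have := hd k l; rewrite heq subrr => /esym h.
    have := psumr_eq0P (fun n _ => mulr_ge0 (W0 k n) (dge n l)) h (i := n) isT.
    by move/eqP; rewrite mulf_eq0 (negbTE hk) /= => /eqP.
  have term0 : forall n m l, W' n m != 0 -> invmx (W *m W') m l = invmx W n l.
    move=> n m l hnm.
    have := psumr_eq0P (fun m _ => mulr_ge0 (W'0 n m) (sqr_ge0 _)) (d0 n l) (i := m) isT.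
    by move/eqP; rewrite mulf_eq0 (negbTE hnm) /= sqrf_eq0 subr_eq0 => /eqP.
  have ex : forall n, exists m, W' n m != 0.
    move=> n; apply/existsP; apply: contraT; rewrite negb_exists => /forallP h.
    have := W's n; rewrite big1; first by move/eqP; rewrite eq_sym oner_eq0.
    by move=> j _; move: (h j); rewrite negbK => /eqP.
  pose f n := odflt n [pick m | W' n m != 0].
  have hf : forall n, W' n (f n) != 0.
    move=> n; rewrite /f; case: pickP => //= h.
    by have [m hm] := ex n; rewrite h in hm.
  have uniq : forall n m, W' n m != 0 -> m = f n.
    move=> n m hm; apply: (rowinj (invmx (W *m W'))); first by rewrite unitmx_inv.
    move=> l.
    by rewrite (term0 n m l hm) (term0 n (f n) l (hf n)).
  have finj : injective f.
    move=> n n' e; apply: (rowinj (invmx W)); first by rewrite unitmx_inv.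
    move=> l.
    by rewrite -(term0 n (f n) l (hf n)) -(term0 n' (f n') l (hf n')) e.
  apply/existsP; exists (perm finj); apply/eqP/matrixP => i j.
  rewrite /perm_mx !mxE permE.
  have zero : forall m, m != f i -> W' i m = 0.
    move=> m ne; apply/eqP; apply: contraT => hm.
    by move: ne; rewrite (uniq i m hm) eqxx.
  have [e|ne] := eqVneq (f i) j; last by rewrite zero // eq_sym.
  rewrite -e.
  have := W's i; rewrite (bigD1 (f i)) //= big1 ?addr0 //.
case/existsP => s /eqP hs.
have hW'e : forall n m, W' n m = (s n == m)%:R by move=> n m; rewrite hs /perm_mx !mxE.
move=> i j; apply/eqP; rewrite -subr_eq0 hd; apply/eqP; apply: big1 => n _.
rewrite (bigD1 (s n)) //= big1 ?addr0; last first.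
  by move=> m /negbTE ne; rewrite hW'e eq_sym ne mul0r.
rewrite hW'e eqxx mul1r (@inv_fact _ _ _ _ hW hW') mxE.
rewrite (bigD1 (s n)) //= big1 ?addr0; last first.
  by move=> m /negbTE ne; rewrite hW'e eq_sym ne mul0r.
by rewrite hW'e eqxx mul1r subrr expr0n /= mulr0.
Qed.
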